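(* Let $\mathcal{K}$ be a $2$-category with pseudolimits of arrows and powers by the free-living isomorphism, and let $f\colon A\to B$ be a morphism. Then: (1) $f$ is a representable isofibration if and only if $w_f\colon A^{\mathbb{I}}\to L_f$ is a representable isofibration; (2) $f$ is a normal isofibration if and only if $w_f$ is a normal isofibration. In either case, $w_f$ is then a retract equivalence.
   Context: $\mathbb{I}$ is the category with two objects and an isomorphism between them; $A^{\mathbb{I}}$ is the power of $A$ by $\mathbb{I}$ (equivalently the pseudolimit of $1_A$), with projections $\mathrm{dom},\mathrm{cod}\colon A^{\mathbb{I}}\to A$. The pseudolimit of $f$ is an object $L_f$ with $u_f\colon L_f\to A$, $v_f\colon L_f\to B$ and invertible $\lambda_f\colon v_f\cong fu_f$, universal among such data; it may be constructed as the pullback of $\mathrm{cod}\colon B^{\mathbb{I}}\to B$ along $f$. $w_f\colon A^{\mathbb{I}}\to L_f$ is the induced morphism with $u_fw_f=\mathrm{cod}$ and whose composite with the projection $L_f\to B^{\mathbb{I}}$ is $f^{\mathbb{I}}$ (it is the Leibniz power of $f$ by the inclusion $1\to\mathbb{I}$). An equivalence $f$ is a retract equivalence if it has a section (equivalently, it has equivalence data with counit an identity). A morphism $f\colon A\to B$ is a representable isofibration if for every object $X$, given $g\colon X\to A$, $h\colon X\to B$ and invertible $\alpha\colon fg\cong h$, there exist $h'\colon X\to A$ and invertible $\alpha'\colon g\cong h'$ with $f\alpha'=\alpha$. A cleavage is a choice of such $(\alpha',h')$ for every $(g,\alpha,h)$, natural in $X$; it is normal if $\alpha'$ is an identity whenever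 $\alpha$ is. A normal isofibration is a representable isofibration admitting a normal cleavage. *)

(* Defs.v *)
Definition cast {X : Type} (C : X -> X -> Type) {f f' g g' : X}
  (e1 : f = f') (e2 : g = g') (a : C f g) : C f' g' :=
  match e1 in _ = y1 return C y1 g' with
  | eq_refl => match e2 in _ = y2 return C f y2 with eq_refl => a end
  end.

Definition hcell_eq {X : Type} (C : X -> X -> Type) {f g f' g' : X}
  (a : C f g) (b : C f' g') : Prop :=
  exists (e1 : f = f') (e2 : g = g'), cast C e1 e2 a = b.

Set Implicit Arguments.
Unset Strict Implicit.

Record TwoCatData := {
  Ob : Type;
  Hom : Ob -> Ob -> Type;
  Cell : forall A B : Ob, Hom A B -> Hom A B -> Type;
  id1 : forall A : Ob, Hom A A;
  (* comp1 g f = g o f *)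
  comp1 : forall A B C : Ob, Hom B C -> Hom A B -> Hom A C;
  id2 : forall (A B : Ob) (f : Hom A B), Cell f f;
  (* vcomp b a = b . a  (first a, then b) *)
  vcomp : forall (A B : Ob) (f g h : Hom A B), Cell g h -> Cell f g -> Cell f h;
  lwhisk : forall (A B C : Ob) (h : Hom B C) (f g : Hom A B),
      Cell f g -> Cell (comp1 h f) (comp1 h g);
  rwhisk : forall (A B C : Ob) (f g : Hom B C),
      Cell f g -> forall h : Hom A B, Cell (comp1 f h) (comp1 g h)
}.

Arguments Hom {t}.
Arguments Cell {t A B}.
Arguments id1 {t}.
Arguments comp1 {t A B C}.
Arguments id2 {t A B}.
Arguments vcomp {t A B f g h}.
Arguments lwhisk {t A B C} h {f g}.
Arguments rwhisk {t A B C f g} a h.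

Section Defs.
Variable K : TwoCatData.

Definition HCell {A B : Ob K} := @Cell K A B.

Record TwoCatAxioms := {
  comp1_assoc : forall (A B C D : Ob K) (h : Hom C D) (g : Hom B C) (f : Hom A B),
      comp1 h (comp1 g f) = comp1 (comp1 h g) f;
  comp1_idl : forall (A B : Ob K) (f : Hom A B), comp1 (id1 B) f = f;
  comp1_idr : forall (A B : Ob K) (f : Hom A B), comp1 f (id1 A) = f;
  vcomp_assoc : forall (A B : Ob K) (f g h k : Hom A B)
      (c : Cell h k) (b : Cell g h) (a : Cell f g),
      vcomp c (vcomp b a) = vcomp (vcomp c b) a;
  vcomp_idl : forall (A B : Ob K) (f g : Hom A B) (a : Cell f g), vcomp (id2 g) a = a;
  vcomp_idr : forall (A B : Ob K) (f g : Hom A B) (a : Cell f g), vcomp a (id2 f) = a;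
  lwhisk_id2 : forall (A B C : Ob K) (h : Hom B C) (f : Hom A B),
      lwhisk h (id2 f) = id2 (comp1 h f);
  rwhisk_id2 : forall (A B C : Ob K) (f : Hom B C) (h : Hom A B),
      rwhisk (id2 f) h = id2 (comp1 f h);
  lwhisk_vcomp : forall (A B C : Ob K) (h : Hom B C) (f g k : Hom A B)
      (b : Cell g k) (a : Cell f g),
      lwhisk h (vcomp b a) = vcomp (lwhisk h b) (lwhisk h a);
  rwhisk_vcomp : forall (A B C : Ob K) (f g k : Hom B C) (h : Hom A B)
      (b : Cell g k) (a : Cell f g),
      rwhisk (vcomp b a) h = vcomp (rwhisk b h) (rwhisk a h);
  lwhisk_id1 : forall (A B : Ob K) (f g : Hom A B) (a : Cell f g),
      hcell_eq HCell (lwhisk (id1 B) a) a;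
  rwhisk_id1 : forall (A B : Ob K) (f g : Hom A B) (a : Cell f g),
      hcell_eq HCell (rwhisk a (id1 A)) a;
  lwhisk_comp1 : forall (A B C D : Ob K) (k : Hom C D) (h : Hom B C)
      (f g : Hom A B) (a : Cell f g),
      hcell_eq HCell (lwhisk k (lwhisk h a)) (lwhisk (comp1 k h) a);
  rwhisk_comp1 : forall (A B C D : Ob K) (f g : Hom C D) (a : Cell f g)
      (h : Hom B C) (k : Hom A B),
      hcell_eq HCell (rwhisk (rwhisk a h) k) (rwhisk a (comp1 h k));
  lrwhisk : forall (A B C D : Ob K) (k : Hom C D) (f g : Hom B C) (a : Cell f g)
      (h : Hom A B),
      hcell_eq HCell (lwhisk k (rwhisk a h)) (rwhisk (lwhisk k a) h);
  interchange : forall (A B C : Ob K) (f g : Hom A B) (h k : Hom B C)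
      (a : Cell f g) (b : Cell h k),
      vcomp (rwhisk b g) (lwhisk h a) = vcomp (lwhisk k a) (rwhisk b f)
}.

Definition is_iso {A B : Ob K} {f g : Hom A B} (a : Cell f g) : Prop :=
  exists b : Cell g f, vcomp b a = id2 f /\ vcomp a b = id2 g.

(* the power A^I by the free-living isomorphism I, with its strict
   (isomorphism-of-hom-categories) universal property *)
Record IPower (A : Ob K) := {
  pw_obj : Ob K;
  pw_dom : Hom pw_obj A;
  pw_cod : Hom pw_obj A;
  pw_iota : Cell pw_dom pw_cod;
  pw_iota_iso : is_iso pw_iota;
  pw_ex : forall (X : Ob K) (g h : Hom X A) (a : Cell g h), is_iso a ->
      exists u : Hom X pw_obj,
        comp1 pw_dom u = g /\ comp1 pw_cod u = h /\ hcell_eq HCell (rwhisk pw_iota u) a;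
  pw_uniq : forall (X : Ob K) (u u' : Hom X pw_obj),
      hcell_eq HCell (rwhisk pw_iota u) (rwhisk pw_iota u') -> u = u';
  pw_2d : forall (X : Ob K) (u v : Hom X pw_obj)
      (b : Cell (comp1 pw_dom u) (comp1 pw_dom v))
      (c : Cell (comp1 pw_cod u) (comp1 pw_cod v)),
      vcomp c (rwhisk pw_iota u) = vcomp (rwhisk pw_iota v) b ->
      exists! d : Cell u v, lwhisk pw_dom d = b /\ lwhisk pw_cod d = c
}.

(* the pseudolimit L_f of an arrow f : A -> B: an object L with
   u : L -> A, v : L -> B and an invertible lam : v => f u, with the
   universal property (isomorphism of hom-categories K(X,L) with the
   category of pseudo-cones over f with vertex X) *)
Record PsLim (HK : TwoCatAxioms) (A B : Ob K) (f : Hom A B) := {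
  pl_obj : Ob K;
  pl_u : Hom pl_obj A;
  pl_v : Hom pl_obj B;
  pl_lam : Cell pl_v (comp1 f pl_u);
  pl_lam_iso : is_iso pl_lam;
  pl_ex : forall (X : Ob K) (a : Hom X A) (b : Hom X B) (c : Cell b (comp1 f a)),
      is_iso c ->
      exists k : Hom X pl_obj,
        comp1 pl_u k = a /\ comp1 pl_v k = b /\ hcell_eq HCell (rwhisk pl_lam k) c;
  pl_uniq : forall (X : Ob K) (k k' : Hom X pl_obj),
      comp1 pl_u k = comp1 pl_u k' ->
      hcell_eq HCell (rwhisk pl_lam k) (rwhisk pl_lam k') -> k = k';
  pl_2d : forall (X : Ob K) (k k' : Hom X pl_obj)
      (b : Cell (comp1 pl_u k) (comp1 pl_u k'))
      (c : Cell (comp1 pl_v k) (comp1 pl_v k')),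
      vcomp (cast HCell (comp1_assoc HK f pl_u k) (comp1_assoc HK f pl_u k')
               (lwhisk f b))
            (rwhisk pl_lam k)
      = vcomp (rwhisk pl_lam k') c ->
      exists! d : Cell k k', lwhisk pl_u d = b /\ lwhisk pl_v d = c
}.

Definition rep_isofib {A B : Ob K} (f : Hom A B) : Prop :=
  forall (X : Ob K) (g : Hom X A) (h : Hom X B) (a : Cell (comp1 f g) h),
    is_iso a ->
    exists (h' : Hom X A) (a' : Cell g h'),
      is_iso a' /\ hcell_eq HCell (lwhisk f a') a.

Record cleavage {A B : Ob K} (f : Hom A B) := {
  cl_obj : forall (X : Ob K) (g : Hom X A) (h : Hom X B) (a : Cell (comp1 f g) h),
      is_iso a -> Hom X A;
  cl_cell : forall (X : Ob K) (g : Hom X A) (h : Hom X B) (a : Cell (comp1 f g) h)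
      (H : is_iso a), Cell g (cl_obj H);
  cl_iso : forall (X : Ob K) (g : Hom X A) (h : Hom X B) (a : Cell (comp1 f g) h)
      (H : is_iso a), is_iso (cl_cell H);
  cl_lift : forall (X : Ob K) (g : Hom X A) (h : Hom X B) (a : Cell (comp1 f g) h)
      (H : is_iso a), hcell_eq HCell (lwhisk f (cl_cell H)) a;
  cl_nat : forall (X Y : Ob K) (k : Hom Y X) (g : Hom X A) (h : Hom X B)
      (a : Cell (comp1 f g) h) (H : is_iso a)
      (ak : Cell (comp1 f (comp1 g k)) (comp1 h k)) (Hk : is_iso ak),
      hcell_eq HCell ak (rwhisk a k) ->
      hcell_eq HCell (cl_cell Hk) (rwhisk (cl_cell H) k)
}.

Definition normal_cleavage {A B : Ob K} {f : Hom A B} (c : cleavage f) : Prop :=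
  forall (X : Ob K) (g : Hom X A) (H : is_iso (id2 (comp1 f g))),
    hcell_eq HCell (cl_cell c H) (id2 g).

Definition normal_isofib {A B : Ob K} (f : Hom A B) : Prop :=
  rep_isofib f /\ exists c : cleavage f, normal_cleavage c.

Definition is_equivalence {A B : Ob K} (f : Hom A B) : Prop :=
  exists g : Hom B A,
    (exists eta : Cell (id1 A) (comp1 g f), is_iso eta) /\
    (exists eps : Cell (comp1 f g) (id1 B), is_iso eps).

Definition retract_equivalence {A B : Ob K} (f : Hom A B) : Prop :=
  is_equivalence f /\ exists s : Hom B A, comp1 f s = id1 B.

End Defs.

Arguments is_iso {K A B f g}.
Arguments rep_isofib {K A B}.
Arguments normal_isofib {K A B}.
Arguments retract_equivalence {K A B}.

(* Main.v *)
Require Import Defs.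
From Stdlib Require Import ProofIrrelevance ClassicalEpsilon.
Set Implicit Arguments.
Unset Strict Implicit.

Notation "a =~= b" := (hcell_eq (@Cell _ _ _) a b) (at level 70).

Section Tools.
Variable K : TwoCatData.
Variable HK : TwoCatAxioms K.

Lemma hrefl {A B : Ob K} {f g : Hom A B} (a : Cell f g) : a =~= a.
Proof. exists eq_refl, eq_refl. reflexivity. Qed.

Lemma hsym {A B : Ob K} {f g f' g' : Hom A B} (a : Cell f g) (b : Cell f' g') :
  a =~= b -> b =~= a.
Proof. intros [e1 [e2 H]]. subst f' g'. simpl in H. subst b. apply hrefl. Qed.

Lemma htrans {A B : Ob K} {f g f' g' f'' g'' : Hom A B} (a : Cell f g) (b : Cell f' g')
  (c : Cell f'' g'') : a =~= b -> b =~= c -> a =~= c.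
Proof.
  intros [e1 [e2 H]] [e3 [e4 H']]. subst f' g'. simpl in H. subst b.
  subst f'' g''. simpl in H'. subst c. apply hrefl.
Qed.

Lemma heq {A B : Ob K} {f g : Hom A B} (a b : Cell f g) : a = b -> a =~= b.
Proof. intros ->. apply hrefl. Qed.

Lemma eqh {A B : Ob K} {f g : Hom A B} (a b : Cell f g) : a =~= b -> a = b.
Proof.
  intros [e1 [e2 H]].
  rewrite (proof_irrelevance _ e1 eq_refl), (proof_irrelevance _ e2 eq_refl) in H.
  exact H.
Qed.

Lemma hcast {A B : Ob K} {f g f' g' : Hom A B} (e1 : f = f') (e2 : g = g') (a : Cell f g) :
  cast (@Cell K A B) e1 e2 a =~= a.
Proof. subst f' g'. apply hrefl. Qed.

Lemma hcastr {A B : Ob K} {f g f' g' : Hom A B} (e1 : f = f') (e2 : g = g') (a : Cell f g) :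
  a =~= cast (@Cell K A B) e1 e2 a.
Proof. apply hsym, hcast. Qed.

Lemma hv {A B : Ob K} {f g h f' g' h' : Hom A B} (a : Cell f g) (b : Cell g h)
  (a' : Cell f' g') (b' : Cell g' h') :
  a =~= a' -> b =~= b' -> vcomp b a =~= vcomp b' a'.
Proof.
  intros [e1 [e2 Ha]] [e3 [e4 Hb]]. subst f' g'. simpl in Ha. subst a'.
  subst h'. rewrite (proof_irrelevance _ e3 eq_refl) in Hb. simpl in Hb. subst b'.
  apply hrefl.
Qed.

Lemma hl {A B C : Ob K} (h h' : Hom B C) {f g f' g' : Hom A B} (a : Cell f g) (a' : Cell f' g') :
  h = h' -> a =~= a' -> lwhisk h a =~= lwhisk h' a'.
Proof. intros <- [e1 [e2 Ha]]. subst f' g'. simpl in Ha. subst a'. apply hrefl. Qed.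

Lemma hr {A B C : Ob K} (h h' : Hom A B) {f g f' g' : Hom B C} (a : Cell f g) (a' : Cell f' g') :
  a =~= a' -> h = h' -> rwhisk a h =~= rwhisk a' h'.
Proof. intros [e1 [e2 Ha]] <-. subst f' g'. simpl in Ha. subst a'. apply hrefl. Qed.

Lemma hid {A B : Ob K} (f f' : Hom A B) : f = f' -> id2 f =~= id2 f'.
Proof. intros <-. apply hrefl. Qed.

Lemma hid_eq {A B : Ob K} {f g f' g' : Hom A B} (a : Cell f g) (b : Cell f' g') (p q : Hom A B) :
  a =~= id2 p -> b =~= id2 q -> p = q -> a =~= b.
Proof. intros H1 H2 <-. apply (htrans H1), hsym, H2. Qed.

Lemma hvid {A B : Ob K} {f g h : Hom A B} (b : Cell g h) (a : Cell f g) (p q : Hom A B) :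
  b =~= id2 p -> a =~= id2 q -> vcomp b a =~= id2 q.
Proof.
  intros [e1 [e2 Hb]] [e3 [e4 Ha]]. subst p q. subst h. subst g.
  simpl in Ha, Hb. subst.
  rewrite (vcomp_idl HK). apply hrefl.
Qed.


Lemma hv_idl {A B : Ob K} {f g h : Hom A B} (b : Cell g h) (a : Cell f g) (p : Hom A B) :
  b =~= id2 p -> vcomp b a =~= a.
Proof.
  intros [e1 [e2 Hb]]. subst p. subst h. simpl in Hb. subst b.
  rewrite (vcomp_idl HK). apply hrefl.
Qed.

Lemma hv_idr {A B : Ob K} {f g h : Hom A B} (b : Cell g h) (a : Cell f g) (p : Hom A B) :
  a =~= id2 p -> vcomp b a =~= b.
Proof.
  intros [e1 [e2 Ha]]. subst p. subst g. simpl in Ha. subst a.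
  rewrite (vcomp_idr HK). apply hrefl.
Qed.

Lemma iso_id {A B : Ob K} (f : Hom A B) : is_iso (id2 f).
Proof. exists (id2 f). rewrite (vcomp_idl HK). auto. Qed.

Lemma iso_v {A B : Ob K} {f g h : Hom A B} (b : Cell g h) (a : Cell f g) :
  is_iso a -> is_iso b -> is_iso (vcomp b a).
Proof.
  intros [a' [Ha1 Ha2]] [b' [Hb1 Hb2]]. exists (vcomp a' b'). split.
  - rewrite <- (vcomp_assoc HK), (vcomp_assoc HK b'), Hb1, (vcomp_idl HK). exact Ha1.
  - rewrite <- (vcomp_assoc HK), (vcomp_assoc HK a), Ha2, (vcomp_idl HK). exact Hb2.
Qed.

Lemma iso_l {A B C : Ob K} (h : Hom B C) {f g : Hom A B} (a : Cell f g) :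
  is_iso a -> is_iso (lwhisk h a).
Proof.
  intros [a' [H1 H2]]. exists (lwhisk h a').
  rewrite <- !(lwhisk_vcomp HK), H1, H2, !(lwhisk_id2 HK). auto.
Qed.

Lemma iso_r {A B C : Ob K} (h : Hom A B) {f g : Hom B C} (a : Cell f g) :
  is_iso a -> is_iso (rwhisk a h).
Proof.
  intros [a' [H1 H2]]. exists (rwhisk a' h).
  rewrite <- !(rwhisk_vcomp HK), H1, H2, !(rwhisk_id2 HK). auto.
Qed.

Lemma iso_h {A B : Ob K} {f g f' g' : Hom A B} (a : Cell f g) (b : Cell f' g') :
  a =~= b -> is_iso a -> is_iso b.
Proof. intros [e1 [e2 H]]. subst f' g'. simpl in H. subst b. auto. Qed.

Definition inv {A B : Ob K} {f g : Hom A B} (a : Cell f g) (H : is_iso a) : Cell g f :=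
  proj1_sig (constructive_indefinite_description _ H).

Lemma inv_l {A B : Ob K} {f g : Hom A B} (a : Cell f g) (H : is_iso a) :
  vcomp (inv H) a = id2 f.
Proof. unfold inv. destruct (constructive_indefinite_description _ H) as [b [H1 H2]]. exact H1. Qed.

Lemma inv_r {A B : Ob K} {f g : Hom A B} (a : Cell f g) (H : is_iso a) :
  vcomp a (inv H) = id2 g.
Proof. unfold inv. destruct (constructive_indefinite_description _ H) as [b [H1 H2]]. exact H2. Qed.

Lemma inv_iso {A B : Ob K} {f g : Hom A B} (a : Cell f g) (H : is_iso a) : is_iso (inv H).
Proof. exists a. split; [apply inv_r | apply inv_l]. Qed.

Lemma inv_uniq {A B : Ob K} {f g : Hom A B} (a : Cell f g) (H : is_iso a) (b : Cell g f) :
  vcomp b a = id2 f -> b = inv H.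
Proof.
  intros E. rewrite <- (vcomp_idr HK b), <- (inv_r H), (vcomp_assoc HK), E, (vcomp_idl HK).
  reflexivity.
Qed.

Lemma inv_uniq' {A B : Ob K} {f g : Hom A B} (a : Cell f g) (H : is_iso a) (b : Cell g f) :
  vcomp a b = id2 g -> b = inv H.
Proof.
  intros E. rewrite <- (vcomp_idl HK b), <- (inv_l H), <- (vcomp_assoc HK), E, (vcomp_idr HK).
  reflexivity.
Qed.

Lemma hinv {A B : Ob K} {f g f' g' : Hom A B} (a : Cell f g) (a' : Cell f' g') (H : is_iso a)
  (H' : is_iso a') : a =~= a' -> inv H =~= inv H'.
Proof.
  intros [e1 [e2 E]]. subst f' g'. simpl in E. subst a'.
  rewrite (proof_irrelevance _ H H'). apply hrefl.
Qed.

Lemma inv_inv {A B : Ob K} {f g : Hom A B} (a : Cell f g) (H : is_iso a) (H' : is_iso (inv H)) :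
  inv H' = a.
Proof. symmetry. apply inv_uniq. apply inv_r. Qed.

Lemma inv_id {A B : Ob K} (f : Hom A B) (H : is_iso (id2 f)) : inv H = id2 f.
Proof. symmetry. apply inv_uniq. apply (vcomp_idl HK). Qed.

Lemma inv_lw {A B C : Ob K} (h : Hom B C) {f g : Hom A B} (a : Cell f g) (H : is_iso a)
  (H' : is_iso (lwhisk h a)) : inv H' = lwhisk h (inv H).
Proof. symmetry. apply inv_uniq. rewrite <- (lwhisk_vcomp HK), inv_l. apply (lwhisk_id2 HK). Qed.

Lemma inv_rw {A B C : Ob K} (h : Hom A B) {f g : Hom B C} (a : Cell f g) (H : is_iso a)
  (H' : is_iso (rwhisk a h)) : inv H' = rwhisk (inv H) h.
Proof. symmetry. apply inv_uniq. rewrite <- (rwhisk_vcomp HK), inv_l. apply (rwhisk_id2 HK). Qed.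

Lemma iso_swap {A B : Ob K} {x y x' y' : Hom A B} (L : Cell x y) (L' : Cell x' y')
  (b : Cell x x') (c : Cell y y') (Hb : is_iso b) (Hc : is_iso c) :
  vcomp c L = vcomp L' b -> vcomp (inv Hc) L' = vcomp L (inv Hb).
Proof.
  intros E.
  rewrite <- (vcomp_idr HK (vcomp (inv Hc) L')), <- (inv_r Hb).
  rewrite (vcomp_assoc HK), <- (vcomp_assoc HK (inv Hc)), <- E, (vcomp_assoc HK), inv_l,
    (vcomp_idl HK). reflexivity.
Qed.

Lemma hlc {A B C D : Ob K} (k : Hom C D) (h : Hom B C) {f g : Hom A B} (a : Cell f g) :
  lwhisk k (lwhisk h a) =~= lwhisk (comp1 k h) a.
Proof. apply (lwhisk_comp1 HK). Qed.
Lemma hrc {A B C D : Ob K} {f g : Hom C D} (a : Cell f g) (h : Hom B C) (k : Hom A B) :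
  rwhisk (rwhisk a h) k =~= rwhisk a (comp1 h k).
Proof. apply (rwhisk_comp1 HK). Qed.
Lemma hlr {A B C D : Ob K} (k : Hom C D) {f g : Hom B C} (a : Cell f g) (h : Hom A B) :
  lwhisk k (rwhisk a h) =~= rwhisk (lwhisk k a) h.
Proof. apply (lrwhisk HK). Qed.

End Tools.

Section PW.
Variable K : TwoCatData.
Variable HK : TwoCatAxioms K.
Variable A : Ob K.
Variable P : IPower A.

Lemma pw_compat {X : Ob K} {x y : Hom X (pw_obj P)} (d : Cell x y) :
  vcomp (lwhisk (pw_cod P) d) (rwhisk (pw_iota P) x) =
  vcomp (rwhisk (pw_iota P) y) (lwhisk (pw_dom P) d).
Proof. symmetry. apply (interchange HK). Qed.

Lemma pw_2d_uniq {X : Ob K} {x y : Hom X (pw_obj P)} (d1 d2 : Cell x y) :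
  lwhisk (pw_dom P) d1 = lwhisk (pw_dom P) d2 ->
  lwhisk (pw_cod P) d1 = lwhisk (pw_cod P) d2 -> d1 = d2.
Proof.
  intros E1 E2.
  destruct (pw_2d (pw_compat d1)) as [d [_ Hu]].
  rewrite <- (Hu d1 (conj eq_refl eq_refl)). apply Hu. auto.
Qed.

Lemma pw_2d_iso {X : Ob K} {x y : Hom X (pw_obj P)} b c
  (E : vcomp c (rwhisk (pw_iota P) x) = vcomp (rwhisk (pw_iota P) y) b)
  (Hb : is_iso b) (Hc : is_iso c) (d : Cell x y) :
  lwhisk (pw_dom P) d = b -> lwhisk (pw_cod P) d = c -> is_iso d.
Proof.
  intros E1 E2.
  pose proof (iso_swap HK Hb Hc E) as E'.
  destruct (pw_2d E') as [d' [[F1 F2] _]].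
  exists d'. split; apply pw_2d_uniq;
    rewrite (lwhisk_vcomp HK), ?E1, ?E2, ?F1, ?F2, (lwhisk_id2 HK);
    first [apply inv_l | apply inv_r].
Qed.

Lemma pw_iota_formula {X : Ob K} {x y : Hom X (pw_obj P)} (d : Cell x y)
  (H : is_iso (lwhisk (pw_dom P) d)) :
  rwhisk (pw_iota P) y = vcomp (vcomp (lwhisk (pw_cod P) d) (rwhisk (pw_iota P) x)) (inv H).
Proof.
  rewrite pw_compat, <- (vcomp_assoc HK), (inv_r H), (vcomp_idr HK). reflexivity.
Qed.

Lemma pw_hcell_uniq {X : Ob K} {x y1 y2 : Hom X (pw_obj P)} (b1 : Cell x y1) (b2 : Cell x y2) :
  is_iso b1 -> is_iso b2 ->
  lwhisk (pw_dom P) b1 =~= lwhisk (pw_dom P) b2 ->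
  lwhisk (pw_cod P) b1 =~= lwhisk (pw_cod P) b2 -> b1 =~= b2.
Proof.
  intros H1 H2 E1 E2.
  assert (Hy : y1 = y2).
  { apply (@pw_uniq K A P).
    rewrite (pw_iota_formula (iso_l HK (pw_dom P) H1)),
            (pw_iota_formula (iso_l HK (pw_dom P) H2)).
    apply hv. apply hinv; exact E1. apply hv. apply hrefl. exact E2. }
  subst y2. apply heq. apply pw_2d_uniq; apply eqh; assumption.
Qed.

Lemma pw_hcell_uniq' {X : Ob K} {x1 y1 x2 y2 : Hom X (pw_obj P)} (b1 : Cell x1 y1) (b2 : Cell x2 y2) :
  x1 = x2 -> y1 = y2 ->
  lwhisk (pw_dom P) b1 =~= lwhisk (pw_dom P) b2 ->
  lwhisk (pw_cod P) b1 =~= lwhisk (pw_cod P) b2 -> b1 =~= b2.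
Proof.
  intros <- <- E1 E2. apply heq. apply pw_2d_uniq; apply eqh; assumption.
Qed.

End PW.

Section PL.
Variable K : TwoCatData.
Variable HK : TwoCatAxioms K.
Variables (A B : Ob K) (f : Hom A B).
Variable L : PsLim HK f.

Lemma pl_compat {X : Ob K} {k k' : Hom X (pl_obj L)} (d : Cell k k') :
  vcomp (cast (HCell (K:=K)) (comp1_assoc HK f (pl_u L) k) (comp1_assoc HK f (pl_u L) k')
           (lwhisk f (lwhisk (pl_u L) d)))
        (rwhisk (pl_lam L) k)
  = vcomp (rwhisk (pl_lam L) k') (lwhisk (pl_v L) d).
Proof.
  rewrite (interchange HK). f_equal. apply eqh.
  apply (htrans (hcast _ _ _)). apply hlc; exact HK.
Qed.

Lemma pl_2d_uniq {X : Ob K} {k k' : Hom X (pl_obj L)} (d1 d2 : Cell k k') :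
  lwhisk (pl_u L) d1 = lwhisk (pl_u L) d2 ->
  lwhisk (pl_v L) d1 = lwhisk (pl_v L) d2 -> d1 = d2.
Proof.
  intros E1 E2.
  destruct (pl_2d (pl_compat d1)) as [d [_ Hu]].
  rewrite <- (Hu d1 (conj eq_refl eq_refl)). apply Hu. auto.
Qed.

Lemma pl_2d_iso {X : Ob K} {k k' : Hom X (pl_obj L)} b c
  (E : vcomp (cast (HCell (K:=K)) (comp1_assoc HK f (pl_u L) k) (comp1_assoc HK f (pl_u L) k')
           (lwhisk f b)) (rwhisk (pl_lam L) k)
       = vcomp (rwhisk (pl_lam L) k') c)
  (Hb : is_iso b) (Hc : is_iso c) (d : Cell k k') :
  lwhisk (pl_u L) d = b -> lwhisk (pl_v L) d = c -> is_iso d.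
Proof.
  intros E1 E2.
  assert (HF : is_iso (cast (HCell (K:=K)) (comp1_assoc HK f (pl_u L) k)
                 (comp1_assoc HK f (pl_u L) k') (lwhisk f b))).
  { eapply iso_h. apply hcastr. apply iso_l; assumption. }
  pose proof (iso_swap HK Hc HF E) as E'.
  assert (E'' : vcomp (cast (HCell (K:=K)) (comp1_assoc HK f (pl_u L) k')
           (comp1_assoc HK f (pl_u L) k) (lwhisk f (inv Hb))) (rwhisk (pl_lam L) k')
       = vcomp (rwhisk (pl_lam L) k) (inv Hc)).
  { rewrite <- E'. f_equal. apply eqh.
    apply (htrans (hcast _ _ _)). rewrite <- (inv_lw HK (h:=f) Hb (iso_l HK f Hb)).
    apply hinv. apply hcastr. }
  destruct (pl_2d E'') as [d' [[F1 F2] _]].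
  exists d'. split; apply pl_2d_uniq;
    rewrite (lwhisk_vcomp HK), ?E1, ?E2, ?F1, ?F2, (lwhisk_id2 HK);
    first [apply inv_l | apply inv_r].
Qed.

Lemma pl_hcell_uniq {X : Ob K} {x1 y1 x2 y2 : Hom X (pl_obj L)} (b1 : Cell x1 y1) (b2 : Cell x2 y2) :
  x1 = x2 -> y1 = y2 ->
  lwhisk (pl_u L) b1 =~= lwhisk (pl_u L) b2 ->
  lwhisk (pl_v L) b1 =~= lwhisk (pl_v L) b2 -> b1 =~= b2.
Proof.
  intros <- <- E1 E2. apply heq. apply pl_2d_uniq; apply eqh; assumption.
Qed.

End PL.

Section Cl.
Variable K : TwoCatData.
Variables (A B : Ob K) (f : Hom A B).
Variable c : cleavage f.

Lemma cl_nat_gen {X Y : Ob K} (k : Hom Y X) (g : Hom X A) (h : Hom X B)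
  (a : Cell (comp1 f g) h) (H : is_iso a) (g2 : Hom Y A) (h2 : Hom Y B)
  (a2 : Cell (comp1 f g2) h2) (H2 : is_iso a2) :
  g2 = comp1 g k -> h2 = comp1 h k -> a2 =~= rwhisk a k ->
  cl_cell c H2 =~= rwhisk (cl_cell c H) k.
Proof. intros -> -> E. apply (cl_nat c H H2 E). Qed.

Lemma cl_normal_gen (Hn : normal_cleavage c) {X : Ob K} (g : Hom X A) (h : Hom X B)
  (a : Cell (comp1 f g) h) (H : is_iso a) :
  a =~= id2 (comp1 f g) -> cl_cell c H =~= id2 g.
Proof.
  intros [e1 [e2 E]]. subst h.
  rewrite (proof_irrelevance _ e1 eq_refl) in E. simpl in E. subst a.
  apply Hn.
Qed.

End Cl.

Notation cid := (constructive_indefinite_description _).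

Section Main.
Variable K : TwoCatData.
Variable HK : TwoCatAxioms K.
Variables (A B : Ob K) (f : Hom A B).
Variable P : IPower A.
Variable L : PsLim HK f.
Variable w : Hom (pw_obj P) (pl_obj L).
Hypothesis Hwu : comp1 (pl_u L) w = pw_cod P.
Hypothesis Hwv : comp1 (pl_v L) w = comp1 f (pw_dom P).
Hypothesis Hwl : rwhisk (pl_lam L) w =~= lwhisk f (pw_iota P).

Local Notation dom := (pw_dom P).
Local Notation cod := (pw_cod P).
Local Notation io := (pw_iota P).
Local Notation u := (pl_u L).
Local Notation v := (pl_v L).
Local Notation lam := (pl_lam L).

Lemma Euw {X : Ob K} (k : Hom X (pw_obj P)) : comp1 u (comp1 w k) = comp1 cod k.
Proof. rewrite (comp1_assoc HK), Hwu. reflexivity. Qed.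

Lemma Evw {X : Ob K} (k : Hom X (pw_obj P)) : comp1 v (comp1 w k) = comp1 f (comp1 dom k).
Proof. rewrite (comp1_assoc HK), Hwv, <- (comp1_assoc HK). reflexivity. Qed.

Lemma Hlamw {X : Ob K} (k : Hom X (pw_obj P)) :
  rwhisk lam (comp1 w k) =~= lwhisk f (rwhisk io k).
Proof.
  apply (htrans (hsym (hrc HK _ _ _))). apply (htrans (hr Hwl eq_refl)).
  apply hsym, (hlr HK).
Qed.

Lemma Hluw {X : Ob K} {k k' : Hom X (pw_obj P)} (b : Cell k k') :
  lwhisk u (lwhisk w b) =~= lwhisk cod b.
Proof. apply (htrans (hlc HK _ _ _)). apply hl. exact Hwu. apply hrefl. Qed.

Lemma Hlvw {X : Ob K} {k k' : Hom X (pw_obj P)} (b : Cell k k') :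
  lwhisk v (lwhisk w b) =~= lwhisk f (lwhisk dom b).
Proof.
  apply (htrans (hlc HK _ _ _)). apply (htrans (hl Hwv (hrefl b))).
  apply hsym, (hlc HK).
Qed.

Lemma lam_formula {X : Ob K} {g : Hom X (pw_obj P)} {h : Hom X (pl_obj L)}
  (a : Cell (comp1 w g) h) (Ha : is_iso a) :
  rwhisk lam h = vcomp (lwhisk (comp1 f u) a)
                   (vcomp (rwhisk lam (comp1 w g)) (inv (iso_l HK v Ha))).
Proof.
  rewrite (vcomp_assoc HK), <- (interchange HK), <- (vcomp_assoc HK), inv_r, (vcomp_idr HK).
  reflexivity.
Qed.

Lemma wlift_core {X : Ob K} {g : Hom X (pw_obj P)} {h : Hom X (pl_obj L)}
  (a : Cell (comp1 w g) h) (Ha : is_iso a) {h0 : Hom X A} (l : Cell (comp1 dom g) h0)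
  (Hl : is_iso l) (Hlf : lwhisk f l =~= lwhisk v a) :
  {h' : Hom X (pw_obj P) & {b : Cell g h' | is_iso b /\ lwhisk w b =~= a /\
     lwhisk dom b =~= l /\ lwhisk cod b =~= lwhisk u a}}.
Proof.
  set (au := cast (@Cell K _ _) (Euw g) eq_refl (lwhisk u a)).
  set (io' := vcomp au (vcomp (rwhisk io g) (inv Hl))).
  assert (Hio' : is_iso io').
  { apply (iso_v HK); [apply (iso_v HK)|]. apply inv_iso. apply (iso_r HK), (pw_iota_iso P).
    eapply iso_h. apply hcastr. apply (iso_l HK), Ha. }
  destruct (cid (pw_ex P Hio')) as [h' [Hh1 [Hh2 Hh3]]].
  set (b := cast (@Cell K _ _) eq_refl (eq_sym Hh1) l).
  set (c := cast (@Cell K _ _) eq_refl (eq_sym Hh2) au).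
  assert (E : vcomp c (rwhisk io g) = vcomp (rwhisk io h') b).
  { apply eqh. apply (htrans (hv (hrefl _) (hcast _ _ _))). apply hsym.
    apply (htrans (hv (hcast _ _ _) Hh3)). apply heq. unfold io'.
    rewrite <- !(vcomp_assoc HK), inv_l, (vcomp_idr HK). reflexivity. }
  destruct (cid (pw_2d E)) as [bt [[Hb1 Hb2] _]].
  exists h', bt.
  assert (Hbt : is_iso bt).
  { refine (pw_2d_iso HK E _ _ Hb1 Hb2).
    eapply iso_h. apply hcastr. exact Hl.
    eapply iso_h. apply hcastr. eapply iso_h. apply hcastr. apply (iso_l HK), Ha. }
  assert (Ewh : comp1 w h' = h).
  { apply (@pl_uniq _ _ _ _ _ L).
    - rewrite Euw, Hh2. reflexivity.
    - apply (htrans (Hlamw h')). apply (htrans (hl eq_refl Hh3)). unfold io'.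
      rewrite !(lwhisk_vcomp HK). rewrite (lam_formula Ha). apply hv.
      + apply hv.
        * rewrite <- (inv_lw HK (h:=f) Hl (iso_l HK f Hl)). apply hinv. exact Hlf.
        * apply hsym, Hlamw.
      + apply (htrans (hl eq_refl (hcast _ _ _))). apply (hlc HK). }
  split; [exact Hbt|]. split; [|split].
  - apply pl_hcell_uniq; auto.
    + apply (htrans (Hluw bt)). rewrite Hb2. apply (htrans (hcast _ _ _)). apply hcast.
    + apply (htrans (Hlvw bt)). rewrite Hb1. apply (htrans (hl eq_refl (hcast _ _ _))). exact Hlf.
  - rewrite Hb1. apply hcast.
  - rewrite Hb2. apply (htrans (hcast _ _ _)). apply hcast.
Qed.

Lemma f_to_w : rep_isofib f -> rep_isofib w.
Proof.
  intros Hf X g h a Ha.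
  set (av := cast (@Cell K _ _) (Evw g) eq_refl (lwhisk v a)).
  assert (Hav : is_iso av). { eapply iso_h. apply hcastr. apply (iso_l HK), Ha. }
  destruct (Hf X (comp1 dom g) (comp1 v h) av Hav) as [h0 [l [Hl Hlf]]].
  destruct (wlift_core Ha Hl (htrans Hlf (hcast _ _ _))) as [h' [bt [Hbt [Hw _]]]].
  exists h', bt. auto.
Qed.


Lemma fdata {X : Ob K} {g : Hom X A} {h : Hom X B} (a : Cell (comp1 f g) h) (Ha : is_iso a) :
  {k : Hom X (pw_obj P) & {m : Hom X (pl_obj L) & {d : Cell (comp1 w k) m |
    is_iso d /\ comp1 dom k = g /\ comp1 cod k = g /\ rwhisk io k =~= id2 g /\
    comp1 u m = g /\ comp1 v m = h /\ rwhisk lam m =~= inv Ha /\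
    lwhisk u d =~= id2 g /\ lwhisk v d =~= a}}}.
Proof.
  destruct (cid (pw_ex P (iso_id HK g))) as [k [Hk1 [Hk2 Hk3]]].
  destruct (cid (pl_ex L (inv_iso Ha))) as [m [Hm1 [Hm2 Hm3]]].
  assert (E1 : comp1 u (comp1 w k) = comp1 u m) by (rewrite Euw, Hk2, Hm1; reflexivity).
  assert (E2 : comp1 f g = comp1 v (comp1 w k)) by (rewrite Evw, Hk1; reflexivity).
  assert (E3 : h = comp1 v m) by (rewrite Hm2; reflexivity).
  set (bb := cast (@Cell K _ _) eq_refl E1 (id2 (comp1 u (comp1 w k)))).
  set (cc := cast (@Cell K _ _) E2 E3 a).
  assert (E : vcomp (cast (HCell (K:=K)) (comp1_assoc HK f u (comp1 w k)) (comp1_assoc HK f u m)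
           (lwhisk f bb)) (rwhisk lam (comp1 w k)) = vcomp (rwhisk lam m) cc).
  { apply eqh. apply (htrans (b := id2 (comp1 f g))).
    - apply (hvid HK) with (p := comp1 f (comp1 u (comp1 w k))).
      + apply (htrans (hcast _ _ _)). apply (htrans (hl eq_refl (hcast _ _ _))).
        apply heq, (lwhisk_id2 HK).
      + apply (htrans (Hlamw k)). apply (htrans (hl eq_refl Hk3)). apply heq, (lwhisk_id2 HK).
    - apply hsym. apply (htrans (hv (hcast _ _ _) Hm3)). apply heq, inv_l. }
  destruct (cid (pl_2d E)) as [d [[Hd1 Hd2] _]].
  exists k, m, d.
  assert (Hd : is_iso d).
  { refine (pl_2d_iso E _ _ Hd1 Hd2).
    eapply iso_h. apply hcastr. apply (iso_id HK).
    eapply iso_h. apply hcastr. exact Ha. }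
  repeat split; auto.
  - rewrite Hd1. apply (htrans (hcast _ _ _)). apply hid. rewrite Euw. exact Hk2.
  - rewrite Hd2. apply hcast.
Qed.

Lemma fout_lift {X : Ob K} {g : Hom X A} {h : Hom X B} (a : Cell (comp1 f g) h)
  (k : Hom X (pw_obj P)) (m : Hom X (pl_obj L)) (d : Cell (comp1 w k) m)
  (Hk1 : comp1 dom k = g) (Hdv : lwhisk v d =~= a)
  {h2 : Hom X (pw_obj P)} (bt : Cell k h2) (Hw : lwhisk w bt =~= d) :
  lwhisk f (cast (@Cell K _ _) Hk1 eq_refl (lwhisk dom bt)) =~= a.
Proof.
  apply (htrans (hl eq_refl (hcast _ _ _))). apply (htrans (hsym (Hlvw bt))).
  apply (htrans (hl eq_refl Hw)). exact Hdv.
Qed.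

Lemma w_to_f : rep_isofib w -> rep_isofib f.
Proof.
  intros Hw X g h a Ha.
  destruct (fdata Ha) as [k [m [d [Hd [Hk1 [Hk2 [Hk3 [Hm1 [Hm2 [Hm3 [Hdu Hdv]]]]]]]]]]].
  destruct (Hw X k m d Hd) as [h2 [bt [Hbt Hwb]]].
  exists (comp1 dom h2), (cast (@Cell K _ _) Hk1 eq_refl (lwhisk dom bt)). split.
  - eapply iso_h. apply hcastr. apply (iso_l HK), Hbt.
  - exact (fout_lift Hk1 Hdv Hwb).
Qed.

Lemma retract : rep_isofib f -> retract_equivalence w.
Proof.
  intros Hf.
  destruct (Hf _ u v (inv (pl_lam_iso L)) (inv_iso _)) as [h1 [a1 [Ha1 Hfa1]]].
  destruct (pw_ex P (inv_iso Ha1)) as [s [Hs1 [Hs2 Hs3]]].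
  assert (Hws : comp1 w s = id1 (pl_obj L)).
  { apply (@pl_uniq _ _ _ _ _ L).
    - rewrite Euw, Hs2, (comp1_idr HK). reflexivity.
    - apply (htrans (Hlamw s)). apply (htrans (hl eq_refl Hs3)).
      rewrite <- (inv_lw HK Ha1 (iso_l HK f Ha1)).
      apply (htrans (b := inv (inv_iso (pl_lam_iso L)))).
      + apply hinv. exact Hfa1.
      + rewrite (inv_inv HK). apply hsym, (rwhisk_id1 HK). }
  split; [|exists s; exact Hws].
  exists s. split.
  2:{ exists (cast (@Cell K _ _) eq_refl Hws (id2 _)). eapply iso_h. apply hcastr. apply (iso_id HK). }
  assert (Ec1 : comp1 cod (id1 _) = comp1 cod (comp1 s w)).
  { rewrite (comp1_idr HK), (comp1_assoc HK), Hs2, Hwu. reflexivity. }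
  set (c := cast (@Cell K _ _) eq_refl Ec1 (id2 (comp1 cod (id1 _)))).
  assert (Eb1 : cod = comp1 u w) by (rewrite Hwu; reflexivity).
  assert (Eb2 : dom = comp1 dom (id1 _)) by (rewrite (comp1_idr HK); reflexivity).
  assert (Eb3 : comp1 h1 w = comp1 dom (comp1 s w)) by (rewrite (comp1_assoc HK), Hs1; reflexivity).
  set (b := cast (@Cell K _ _) Eb2 Eb3
              (vcomp (rwhisk a1 w) (cast (@Cell K _ _) eq_refl Eb1 io))).
  assert (E : vcomp c (rwhisk io (id1 _)) = vcomp (rwhisk io (comp1 s w)) b).
  { apply eqh. apply (htrans (b := io)).
    - unfold c. apply (htrans (hv_idl HK _ (hcast _ _ _))). apply (rwhisk_id1 HK).
    - apply hsym. unfold b.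
      apply (htrans (hv (hcast _ _ _) (htrans (hsym (hrc HK _ _ _)) (hr Hs3 eq_refl)))).
      apply (htrans (b := cast (@Cell K _ _) eq_refl Eb1 io)); [|apply hcast].
      apply heq. rewrite (vcomp_assoc HK), <- (rwhisk_vcomp HK), inv_l, (rwhisk_id2 HK),
        (vcomp_idl HK). reflexivity. }
  destruct (pw_2d E) as [eta [[He1 He2] _]].
  exists eta. refine (pw_2d_iso HK E _ _ He1 He2).
  - eapply iso_h. apply hcastr. apply (iso_v HK).
    eapply iso_h. apply hcastr. apply (pw_iota_iso P). apply (iso_r HK), Ha1.
  - eapply iso_h. apply hcastr. apply (iso_id HK).
Qed.

Definition av {X : Ob K} {g : Hom X (pw_obj P)} {h : Hom X (pl_obj L)} (a : Cell (comp1 w g) h)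
  : Cell (comp1 f (comp1 dom g)) (comp1 v h) := cast (@Cell K _ _) (Evw g) eq_refl (lwhisk v a).

Lemma av_h {X : Ob K} {g : Hom X (pw_obj P)} {h : Hom X (pl_obj L)} (a : Cell (comp1 w g) h) :
  av a =~= lwhisk v a.
Proof. apply hcast. Qed.

Lemma av_iso {X : Ob K} {g : Hom X (pw_obj P)} {h : Hom X (pl_obj L)} (a : Cell (comp1 w g) h)
  (Ha : is_iso a) : is_iso (av a).
Proof. eapply iso_h. apply hsym, av_h. apply (iso_l HK), Ha. Qed.

Section CW.
Variable c : cleavage f.

Definition cw_res {X : Ob K} {g : Hom X (pw_obj P)} {h : Hom X (pl_obj L)}
  (a : Cell (comp1 w g) h) (Ha : is_iso a) :=
  wlift_core Ha (cl_iso c (av_iso Ha)) (htrans (cl_lift c (av_iso Ha)) (av_h a)).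

Definition cw_obj {X : Ob K} {g : Hom X (pw_obj P)} {h : Hom X (pl_obj L)}
  (a : Cell (comp1 w g) h) (Ha : is_iso a) : Hom X (pw_obj P) := projT1 (cw_res Ha).

Definition cw_cell {X : Ob K} {g : Hom X (pw_obj P)} {h : Hom X (pl_obj L)}
  (a : Cell (comp1 w g) h) (Ha : is_iso a) : Cell g (cw_obj Ha) := proj1_sig (projT2 (cw_res Ha)).

Lemma cw_spec {X : Ob K} {g : Hom X (pw_obj P)} {h : Hom X (pl_obj L)}
  (a : Cell (comp1 w g) h) (Ha : is_iso a) :
  is_iso (cw_cell Ha) /\ lwhisk w (cw_cell Ha) =~= a /\
  lwhisk dom (cw_cell Ha) =~= cl_cell c (av_iso Ha) /\ lwhisk cod (cw_cell Ha) =~= lwhisk u a.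
Proof. exact (proj2_sig (projT2 (cw_res Ha))). Qed.

Lemma cw_nat (X Y : Ob K) (k : Hom Y X) (g : Hom X (pw_obj P)) (h : Hom X (pl_obj L))
  (a : Cell (comp1 w g) h) (H : is_iso a) (ak : Cell (comp1 w (comp1 g k)) (comp1 h k))
  (Hk : is_iso ak) :
  ak =~= rwhisk a k -> cw_cell Hk =~= rwhisk (cw_cell H) k.
Proof.
  intros E.
  destruct (cw_spec H) as [Hb [_ [Hd Hc]]]. destruct (cw_spec Hk) as [Hb2 [_ [Hd2 Hc2]]].
  apply (pw_hcell_uniq HK Hb2 (iso_r HK k Hb)).
  - apply (htrans Hd2).
    apply (htrans (cl_nat_gen c (av_iso H) (av_iso Hk) (comp1_assoc HK dom g k)
                     (comp1_assoc HK v h k)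
           (htrans (av_h ak) (htrans (hl eq_refl E) (htrans (hlr HK _ _ _)
              (hr (hsym (av_h a)) eq_refl)))))).
    apply (htrans (hr (hsym Hd) eq_refl)). apply hsym, (hlr HK).
  - apply (htrans Hc2). apply (htrans (hl eq_refl E)). apply (htrans (hlr HK _ _ _)).
    apply (htrans (hr (hsym Hc) eq_refl)). apply hsym, (hlr HK).
Qed.

Definition cw : cleavage w :=
  @Build_cleavage K _ _ w (fun X g h a Ha => cw_obj Ha) (fun X g h a Ha => cw_cell Ha)
    (fun X g h a Ha => proj1 (cw_spec Ha)) (fun X g h a Ha => proj1 (proj2 (cw_spec Ha)))
    cw_nat.

Lemma cw_normal : normal_cleavage c -> normal_cleavage cw.
Proof.
  intros Hn X g H. simpl.
  destruct (cw_spec H) as [Hb [_ [Hd Hc]]].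
  apply (pw_hcell_uniq HK Hb (iso_id HK g)).
  - apply (htrans Hd).
    apply (htrans (cl_normal_gen Hn (av_iso H)
             (htrans (av_h _) (htrans (heq (lwhisk_id2 HK _ _)) (hid (Evw g)))))).
    apply hsym, heq, (lwhisk_id2 HK).
  - apply (htrans Hc). apply (htrans (heq (lwhisk_id2 HK _ _))).
    apply (htrans (hid (Euw g))). apply hsym, heq, (lwhisk_id2 HK).
Qed.

End CW.

Section CF.
Variable cw' : cleavage w.

Definition fd_k {X : Ob K} {g : Hom X A} {h : Hom X B} (a : Cell (comp1 f g) h) (Ha : is_iso a)
  : Hom X (pw_obj P) := projT1 (fdata Ha).
Definition fd_m {X : Ob K} {g : Hom X A} {h : Hom X B} (a : Cell (comp1 f g) h) (Ha : is_iso a)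
  : Hom X (pl_obj L) := projT1 (projT2 (fdata Ha)).
Definition fd_d {X : Ob K} {g : Hom X A} {h : Hom X B} (a : Cell (comp1 f g) h) (Ha : is_iso a)
  : Cell (comp1 w (fd_k Ha)) (fd_m Ha) := proj1_sig (projT2 (projT2 (fdata Ha))).

Lemma fd_spec {X : Ob K} {g : Hom X A} {h : Hom X B} (a : Cell (comp1 f g) h) (Ha : is_iso a) :
    is_iso (fd_d Ha) /\ comp1 dom (fd_k Ha) = g /\ comp1 cod (fd_k Ha) = g /\
    rwhisk io (fd_k Ha) =~= id2 g /\
    comp1 u (fd_m Ha) = g /\ comp1 v (fd_m Ha) = h /\ rwhisk lam (fd_m Ha) =~= inv Ha /\
    lwhisk u (fd_d Ha) =~= id2 g /\ lwhisk v (fd_d Ha) =~= a.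
Proof. exact (proj2_sig (projT2 (projT2 (fdata Ha)))). Qed.

Definition fd_iso {X : Ob K} {g : Hom X A} {h : Hom X B} (a : Cell (comp1 f g) h) (Ha : is_iso a)
  : is_iso (fd_d Ha) := proj1 (fd_spec Ha).
Definition fd_k1 {X : Ob K} {g : Hom X A} {h : Hom X B} (a : Cell (comp1 f g) h) (Ha : is_iso a)
  : comp1 dom (fd_k Ha) = g := proj1 (proj2 (fd_spec Ha)).

Definition cf_obj {X : Ob K} {g : Hom X A} {h : Hom X B} (a : Cell (comp1 f g) h) (Ha : is_iso a)
  : Hom X A := comp1 dom (cl_obj cw' (fd_iso Ha)).
Definition cf_cell {X : Ob K} {g : Hom X A} {h : Hom X B} (a : Cell (comp1 f g) h) (Ha : is_iso a)
  : Cell g (cf_obj Ha) :=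
  cast (@Cell K _ _) (fd_k1 Ha) eq_refl (lwhisk dom (cl_cell cw' (fd_iso Ha))).

Lemma cf_iso {X : Ob K} {g : Hom X A} {h : Hom X B} (a : Cell (comp1 f g) h) (Ha : is_iso a) :
  is_iso (cf_cell Ha).
Proof. eapply iso_h. apply hcastr. apply (iso_l HK), cl_iso. Qed.

Lemma cf_lift {X : Ob K} {g : Hom X A} {h : Hom X B} (a : Cell (comp1 f g) h) (Ha : is_iso a) :
  lwhisk f (cf_cell Ha) =~= a.
Proof.
  unfold cf_cell. apply fout_lift with (d := fd_d Ha).
  - apply (fd_spec Ha).
  - apply cl_lift.
Qed.

Lemma cf_nat (X Y : Ob K) (k : Hom Y X) (g : Hom X A) (h : Hom X B)
  (a : Cell (comp1 f g) h) (H : is_iso a) (ak : Cell (comp1 f (comp1 g k)) (comp1 h k))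
  (Hk : is_iso ak) :
  ak =~= rwhisk a k -> cf_cell Hk =~= rwhisk (cf_cell H) k.
Proof.
  intros E.
  pose proof (fd_spec H) as [Hd [Hk1 [Hk2 [Hk3 [Hm1 [Hm2 [Hm3 [Hdu Hdv]]]]]]]].
  pose proof (fd_spec Hk) as [Hd' [Hk1' [Hk2' [Hk3' [Hm1' [Hm2' [Hm3' [Hdu' Hdv']]]]]]]].
  assert (Ek : fd_k Hk = comp1 (fd_k H) k).
  { apply (@pw_uniq _ _ P). apply (htrans Hk3'). apply hsym.
    apply (htrans (hsym (hrc HK _ _ _))). apply (htrans (hr Hk3 eq_refl)).
    apply heq, (rwhisk_id2 HK). }
  assert (Em : fd_m Hk = comp1 (fd_m H) k).
  { apply (@pl_uniq _ _ _ _ _ L).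
    - rewrite Hm1', (comp1_assoc HK), Hm1. reflexivity.
    - apply (htrans Hm3'). apply (htrans (hinv Hk (iso_r HK k H) E)).
      rewrite (inv_rw HK H). apply (htrans (hr (hsym Hm3) eq_refl)). apply (hrc HK). }
  assert (Ed : fd_d Hk =~= rwhisk (fd_d H) k).
  { apply pl_hcell_uniq.
    - rewrite Ek. apply (comp1_assoc HK).
    - exact Em.
    - apply (htrans Hdu'). apply hsym. apply (htrans (hlr HK _ _ _)).
      apply (htrans (hr Hdu eq_refl)). apply heq, (rwhisk_id2 HK).
    - apply (htrans Hdv'). apply (htrans E). apply (htrans (hr (hsym Hdv) eq_refl)).
      apply hsym, (hlr HK). }
  unfold cf_cell. apply (htrans (hcast _ _ _)). apply hsym.
  apply (htrans (hr (hcast _ _ _) eq_refl)). apply hsym.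
  apply (htrans (hl eq_refl (cl_nat_gen cw' (fd_iso H) (fd_iso Hk) Ek Em Ed))).
  apply (hlr HK).
Qed.

Definition cf : cleavage f :=
  @Build_cleavage K _ _ f (fun X g h a Ha => cf_obj Ha) (fun X g h a Ha => cf_cell Ha)
    (fun X g h a Ha => cf_iso Ha) (fun X g h a Ha => cf_lift Ha) cf_nat.

Lemma cf_normal : normal_cleavage cw' -> normal_cleavage cf.
Proof.
  intros Hn X g H. simpl.
  pose proof (fd_spec H) as [Hd [Hk1 [Hk2 [Hk3 [Hm1 [Hm2 [Hm3 [Hdu Hdv]]]]]]]].
  assert (Emw : fd_m H = comp1 w (fd_k H)).
  { apply (@pl_uniq _ _ _ _ _ L).
    - rewrite Hm1, Euw, Hk2. reflexivity.
    - apply (htrans Hm3). rewrite (inv_id HK). apply hsym.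
      apply (htrans (Hlamw _)). apply (htrans (hl eq_refl Hk3)). apply heq, (lwhisk_id2 HK). }
  assert (Ed : fd_d H =~= id2 (comp1 w (fd_k H))).
  { apply pl_hcell_uniq; auto.
    - apply (htrans Hdu). apply hsym. apply (htrans (heq (lwhisk_id2 HK _ _))).
      apply hid. rewrite Euw. exact Hk2.
    - apply (htrans Hdv). apply hsym. apply (htrans (heq (lwhisk_id2 HK _ _))).
      apply hid. rewrite Evw, Hk1. reflexivity. }
  unfold cf_cell. apply (htrans (hcast _ _ _)).
  apply (htrans (hl eq_refl (cl_normal_gen Hn (fd_iso H) Ed))).
  apply (htrans (heq (lwhisk_id2 HK _ _))). apply hid. exact Hk1.
Qed.

End CF.

End Main.

Theorem proposition3p9 (K : TwoCatData) (HK : TwoCatAxioms K)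
  (pw : forall A : Ob K, IPower A)
  (pl : forall (A B : Ob K) (f : Hom A B), PsLim HK f)
  (A B : Ob K) (f : Hom A B)
  (w : Hom (pw_obj (pw A)) (pl_obj (pl A B f)))
  (Hwu : comp1 (pl_u (pl A B f)) w = pw_cod (pw A))
  (Hwv : comp1 (pl_v (pl A B f)) w = comp1 f (pw_dom (pw A)))
  (Hwl : hcell_eq (@Cell K _ _) (rwhisk (pl_lam (pl A B f)) w) (lwhisk f (pw_iota (pw A)))) :
  (rep_isofib f <-> rep_isofib w) /\
  (normal_isofib f <-> normal_isofib w) /\
  (rep_isofib f -> retract_equivalence w).
Proof.
  split; [|split].
  - split. exact (f_to_w Hwu Hwv Hwl). exact (w_to_f Hwu Hwv Hwl).
  - split.
    + intros [Hf [c Hc]]. split. exact (f_to_w Hwu Hwv Hwl Hf).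
      exists (cw Hwu Hwv Hwl c). exact (cw_normal Hwu Hwv Hwl Hc).
    + intros [Hw [c Hc]]. split. exact (w_to_f Hwu Hwv Hwl Hw).
      exists (cf Hwu Hwv Hwl c). exact (cf_normal Hwu Hwv Hwl Hc).
  - exact (retract Hwu Hwl).
Qed.
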